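(* Let $n\in\mathbb N$ and let $\rho:\mathbb H^n\to\mathbb R$ be a $C^2$-function (in the real coordinates) for which there is a constant $\epsilon_0>0$ such that $$\sum_{l,m=1}^{4n}\frac{\partial^2\rho(z)}{\partial x_l\,\partial x_m}\,t_lt_m\ \ge\ \epsilon_0|t|^2\qquad\text{for all } z\in\mathbb H^n,\ t\in\mathbb R^{4n},$$ and let $U:=\{z\in\mathbb H^n:\rho(z)<0\}$. Define $v_\rho:\mathbb H^n\to\mathbb H^n$ by $v_\rho(z):=(\,{}^1v(z),\dots,{}^nv(z))$ with ${}^lv(z):=\sum_{m=1}^4\frac{\partial\rho(z)}{\partial x_{4(l-1)+m}}\,S_m$. Then $v_\rho$ is a quaternion boundary distinguishing map for $U$: it is a $C^1$ map and $$\langle v_\rho(\zeta);\zeta-z\rangle\neq 0\qquad\text{for all }\zeta\in\partial U,\ z\in U .$$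
   Context: $\mathbb H$ denotes the quaternions with real basis $S_1=e$ (the unit), $S_2=i$, $S_3=j$, $S_4=k$, $i^2=j^2=k^2=-e$, $ij=-ji=k$; for $a=a_1e+a_2i+a_3j+a_4k$ its conjugate is $\tilde a=a_1e-a_2i-a_3j-a_4k$. A point $z\in\mathbb H^n$ is written $z=({}^1z,\dots,{}^nz)$ with ${}^lz=\sum_{m=1}^4 x_{4(l-1)+m}S_m$, $x_r\in\mathbb R$, and $|t|$ is the Euclidean norm on $\mathbb R^{4n}$. The scalar product is $\langle\zeta;z\rangle:=\sum_{l=1}^n {}^l\tilde\zeta\,{}^lz\in\mathbb H$. (In the paper's notation, ${}^lv=\sum_m (\partial\rho/\partial\,{}^lz).S_m\,S_m$, where $(\partial\rho/\partial\,{}^lz).S_m$ is the derivative of $\rho$ in the direction $S_m$ of the $l$-th quaternion coordinate.) A quaternion boundary distinguishing map for a bounded open set $U\subset\mathbb H^n$ is a quaternion-valued $C^1$ map $\psi(\zeta,z)$ defined on $V\times U$, $V$ a neighbourhood of $\partial U$, with $\langle\psi(\zeta,z);\zeta-z\rangle\neq0$ for all $(\zeta,z)\in\partial U\times U$; here $\psi(\zeta,z)=v_\rho(\zeta)$. *)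

(* Defs.v *)
From HB Require Import structures.
From mathcomp Require Import all_boot all_order all_algebra.
From mathcomp Require Import all_classical all_reals all_analysis.
Set Implicit Arguments. Unset Strict Implicit. Unset Printing Implicit Defensive.
Import Order.TTheory GRing.Theory Num.Theory.
Import numFieldNormedType.Exports.
Local Open Scope classical_set_scope.
Local Open Scope ring_scope.

Record quat (R : realType) := Quat { q1 : R; q2 : R; q3 : R; q4 : R }.

Section Quat.
Variable R : realType.
Definition qzero : quat R := Quat 0 0 0 0.
Definition qadd (a b : quat R) : quat R :=
  Quat (q1 a + q1 b) (q2 a + q2 b) (q3 a + q3 b) (q4 a + q4 b).
(* Hamilton product, i^2=j^2=k^2=-e, ij=-ji=k (hence jk=i, ki=j) *)
Definition qmul (a b : quat R) : quat R :=
  Quat (q1 a * q1 b - q2 a * q2 b - q3 a * q3 b - q4 a * q4 b)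
       (q1 a * q2 b + q2 a * q1 b + q3 a * q4 b - q4 a * q3 b)
       (q1 a * q3 b - q2 a * q4 b + q3 a * q1 b + q4 a * q2 b)
       (q1 a * q4 b + q2 a * q3 b - q3 a * q2 b + q4 a * q1 b).
Definition qconj (a : quat R) : quat R := Quat (q1 a) (- q2 a) (- q3 a) (- q4 a).
End Quat.

(* real coordinate index of  x_{4(l-1)+m}  (1-based) = l*4+m (0-based) *)
Lemma qidx_proof (n : nat) (l : 'I_n) (m : 'I_4) : (l * 4 + m < n * 4)%N.
Proof.
have hl := ltn_ord l; have hm := ltn_ord m.
move: (nat_of_ord l) (nat_of_ord m) hl hm => a b ha hb.
have : (a.+1 * 4 <= n * 4)%N by rewrite leq_mul2r ha orbT.
by rewrite mulSn; move=> h; apply: leq_trans h; rewrite addnC ltn_add2r.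
Qed.
Definition qidx (n : nat) (l : 'I_n) (m : 'I_4) : 'I_(n * 4) :=
  Ordinal (qidx_proof l m).

Definition i4_0 : 'I_4 := @Ordinal 4 0 isT.
Definition i4_1 : 'I_4 := @Ordinal 4 1 isT.
Definition i4_2 : 'I_4 := @Ordinal 4 2 isT.
Definition i4_3 : 'I_4 := @Ordinal 4 3 isT.

Definition qcoord (R : realType) (n : nat) (z : 'rV[R]_(n * 4)) (l : 'I_n) : quat R :=
  Quat (z 0 (qidx l i4_0)) (z 0 (qidx l i4_1)) (z 0 (qidx l i4_2)) (z 0 (qidx l i4_3)).

Definition qscal (R : realType) (n : nat) (zeta z : 'rV[R]_(n * 4)) : quat R :=
  \big[@qadd R/qzero R]_(l < n) qmul (qconj (qcoord zeta l)) (qcoord z l).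

Definition ecoord (R : realType) (N : nat) (k : 'I_N) : 'rV[R]_N := delta_mx 0 k.

Definition pderiv (R : realType) (N : nat) (k : 'I_N) (f : 'rV[R]_N -> R)
  : 'rV[R]_N -> R := fun z => 'D_(@ecoord R N k) f z.

Definition C1 (R : realType) (N : nat) (f : 'rV[R]_N -> R) : Prop :=
  continuous f /\
  forall k : 'I_N, (forall z, derivable f z (@ecoord R N k)) /\ continuous (pderiv k f).

Definition C2 (R : realType) (N : nat) (f : 'rV[R]_N -> R) : Prop :=
  C1 f /\ forall k : 'I_N, C1 (pderiv k f).

Definition C1map (R : realType) (N M : nat) (F : 'rV[R]_N -> 'rV[R]_M) : Prop :=
  forall k : 'I_M, C1 (fun z => F z 0 k).

Definition boundary (T : topologicalType) (A : set T) : set T :=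
  closure A `\` interior A.

(* v_rho(z) : real components d rho / d x_r, so that
   ^l v = sum_m (d rho / d x_{4(l-1)+m}) S_m *)
Definition vrho (R : realType) (n : nat) (rho : 'rV[R]_(n * 4) -> R)
  : 'rV[R]_(n * 4) -> 'rV[R]_(n * 4) :=
  fun z => \row_(r < n * 4) pderiv r rho z.

(* Main.v *)
Require Import Defs.
From HB Require Import structures.
From mathcomp Require Import all_boot all_order all_algebra.
From mathcomp Require Import all_classical all_reals all_analysis.
From mathcomp Require Import ring lra zify.
Import Order.TTheory GRing.Theory Num.Theory.
Import numFieldNormedType.Exports.
Local Open Scope classical_set_scope.
Local Open Scope ring_scope.


Lemma is_deriveI {R : realType} N (f : 'rV[R]_N -> R) (p v : 'rV[R]_N) (l : R) :
  (fun h : R => h^-1 *: (f (h *: v + p) - f p)) @ 0^' --> l -> is_derive p v f l.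
Proof.
move=> H.
have dv : derivable f p v.
  by apply/cvg_ex; exists l; exact: H.
apply: DeriveDef => //; exact: (cvg_lim _ H).
Qed.

Lemma is_deriveI1 {R : realType} (f : R -> R) (p : R) (l : R) :
  (fun h : R => h^-1 *: (f (h + p) - f p)) @ 0^' --> l -> is_derive p 1 f l.
Proof.
move=> H.
have E : (fun h : R => h^-1 *: ((f \o shift p) (h *: 1) - f p)) = (fun h : R => h^-1 *: (f (h + p) - f p)).
  by apply: funext => h /=; rewrite /GRing.scale /= mulr1.
have dv : derivable f p 1.
  by apply/cvg_ex; exists l; rewrite /= E; exact: H.
apply: DeriveDef => //; rewrite /derive E; exact: (cvg_lim _ H).
Qed.

Lemma line_derive {R : realType} N (f : 'rV[R]_N -> R) (a v : 'rV[R]_N) (s D : R) :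
  is_derive (s *: v + a) v f D -> is_derive s 1 (fun s => f (s *: v + a)) D.
Proof.
move=> [dv dval]; apply: is_deriveI1.
have E : (fun h : R => h^-1 *: (f ((h + s) *: v + a) - f (s *: v + a))) =
  (fun h : R => h^-1 *: ((f \o shift (s *: v + a)) (h *: v) - f (s *: v + a))).
  by apply: funext => h /=; rewrite scalerDl addrA.
rewrite E -dval; exact: dv.
Qed.

Lemma cont_of_derive {R : realType} (phi dphi : R -> R) :
  (forall t : R, is_derive t 1 phi (dphi t)) -> continuous phi.
Proof.
move=> H t; apply: differentiable_continuous; apply/derivable1_diffP.
by case: (H t).
Qed.

Lemma MVT2 {R : realType} (phi dphi : R -> R) :
  (forall t : R, is_derive t 1 phi (dphi t)) ->
  forall b, exists th, `|th| <= `|b| /\ phi b - phi 0 = dphi th * b.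
Proof.
move=> H b.
have C := @cont_of_derive R phi dphi H.
case: (leP 0 b) => hb.
  have [c cab E] := @MVT_segment R phi dphi 0 b hb (fun x _ => H x)
     (continuous_subspaceT C).
  exists c; split; last by rewrite E subr0.
  move: cab; rewrite in_itv /= => /andP [c0 cb].
  by rewrite !ger0_norm.
have hb' : b <= 0 by apply: ltW.
have [c cab E] := @MVT_segment R phi dphi b 0 hb' (fun x _ => H x)
     (continuous_subspaceT C).
exists c; split.
  move: cab; rewrite in_itv /= => /andP [c0 cb].
  by rewrite !ler0_norm // lerN2.
apply/eqP; rewrite -(eqr_opp) opprB E; apply/eqP; ring.
Qed.

Lemma addcoord {R : realType} N (f : 'rV[R]_N -> R) (p u : 'rV[R]_N) (a c : R) (k : 'I_N) :
  is_derive p u f a -> (forall x, derivable f x (@ecoord R N k)) ->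
  {for p, continuous (pderiv k f)} ->
  is_derive p (c *: @ecoord R N k + u) f (c * pderiv k f p + a).
Proof.
move=> [du dval] dk ck.
set e := @ecoord R N k.
apply: is_deriveI.
have E : (fun h : R => h^-1 *: (f (h *: (c *: e + u) + p) - f p)) =
   (fun h => h^-1 *: (f ((h*c) *: e + (h *: u + p)) - f (h *: u + p)))
   + (fun h => h^-1 *: ((f \o shift p) (h *: u) - f p)).
  apply: funext => h; rewrite fctE /=.
  have -> : h *: (c *: e + u) + p = (h * c) *: e + (h *: u + p) by rewrite scalerDr scalerA addrA.
  rewrite -scalerDr; congr (_ *: _); ring.
rewrite E; apply: cvgD; last by rewrite -dval.
apply/cvgrPdist_le => eps eps0.
have /cvgrPdist_le /(_ (eps / (`|c| + 1))) : {for p, continuous (pderiv k f)} := ck.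
have c1 : 0 < `|c| + 1 by rewrite ltr_wpDl.
move=> /(_ (divr_gt0 eps0 c1)) /nbhs_normP [d d0 Hd].
set M := `|c| * `|e| + `|u| + 1.
have M0 : 0 < M by rewrite /M ltr_wpDl // addr_ge0 // mulr_ge0.
near=> h.
have hn0 : h != 0 by near: h; exact: nbhs_dnbhs_neq.
have hs : `|h| < d / M by near: h; apply: dnbhs0_lt; exact: divr_gt0.
set q := h *: u + p.
have H : forall t : R, is_derive t 1 (fun t => f (t *: e + q)) (pderiv k f (t *: e + q)).
  by move=> t; apply: line_derive; apply: derivableP; exact: dk.
have [th [thb Eth]] := @MVT2 R _ _ H (h * c).
rewrite /= scale0r add0r in Eth.
rewrite Eth.
have -> : h^-1 *: (pderiv k f (th *: e + q) * (h * c)) = c * pderiv k f (th *: e + q).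
  by rewrite /GRing.scale /=; field.
rewrite -mulrBr normrM.
have Hy : `|pderiv k f p - pderiv k f (th *: e + q)| <= eps / (`|c| + 1).
  apply: Hd; rewrite /ball_ /= /q.
  rewrite addrA opprD addrCA subrr addr0 normrN.
  apply: (le_lt_trans (ler_normD _ _)); rewrite !normrZ.
  apply: (@le_lt_trans _ _ (`|h| * M)); last by rewrite -ltr_pdivlMr.
  rewrite /M; apply: (@le_trans _ _ (`|h| * (`|c| * `|e| + `|u|))).
    rewrite mulrDr lerD2r mulrA; apply: ler_wpM2r => //.
    by move: thb; rewrite normrM.
  by apply: ler_wpM2l => //; rewrite lerDl.
apply: (le_trans (ler_wpM2l (normr_ge0 _) Hy)).
rewrite mulrA ler_pdivrMr // mulrC ler_pM2l // lerDl //.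
Unshelve. all: by end_near.
Qed.
Lemma gradient {R : realType} N (f : 'rV[R]_N -> R)
  (dk : forall k x, derivable f x (@ecoord R N k))
  (ck : forall k, continuous (pderiv k f)) p h :
  is_derive p h f (\sum_(k < N) h 0 k * pderiv k f p).
Proof.
rewrite {1}[h]row_sum_delta.
apply: (big_rec2 (fun v a => is_derive p v f a)).
  exact: is_derive0.
move=> k v a _ H; apply: addcoord => //; exact: ck.
Qed.

Lemma convex_ineq {R : realType} N (f : 'rV[R]_N -> R)
  (dk : forall k x, derivable f x (@ecoord R N k))
  (ck : forall k, continuous (pderiv k f))
  (dk2 : forall l k x, derivable (pderiv l f) x (@ecoord R N k))
  (ck2 : forall l k, continuous (pderiv k (pderiv l f)))
  (hess : forall z (t : 'rV[R]_N), 0 <= \sum_(l < N) \sum_(m < N)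
         pderiv m (pderiv l f) z * t 0 l * t 0 m) (a h : 'rV[R]_N) :
  \sum_(k < N) h 0 k * pderiv k f a <= f (h + a) - f a.
Proof.
pose g s := f (s *: h + a).
pose G s := \sum_(k < N) h 0 k * pderiv k f (s *: h + a).
pose G' s := \sum_(l < N) h 0 l * \sum_(m < N) h 0 m * pderiv m (pderiv l f) (s *: h + a).
have Hg : forall s : R, is_derive s 1 g (G s).
  by move=> s; apply: line_derive; apply: gradient.
have HG : forall s : R, is_derive s 1 G (G' s).
  move=> s.
  have E : G = (fun s => (\sum_(l < N) (h 0 l \*: pderiv l f)) (s *: h + a)).
    apply: funext => s'; rewrite /G fct_sumE; apply: eq_bigr => l _.
    by [].
  rewrite E; apply: line_derive; apply: is_derive_sum => l.
  apply: is_deriveZ; exact: gradient.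
have G'ge0 : forall s, 0 <= G' s.
  move=> s; rewrite (_ : G' s = \sum_(l < N) \sum_(m < N) pderiv m (pderiv l f) (s *: h + a) * h 0 l * h 0 m); first exact: hess.
  rewrite /G'; apply: eq_bigr => l _; rewrite big_distrr /=.
  by apply: eq_bigr => m _; ring.
have Gmono : forall x, 0 <= x -> x <= 1 -> G 0 <= G x.
  move=> x x0 x1.
  apply: (@ger0_derive1_ndecr R G 0 1) => //.
  - by move=> y _; rewrite derive1E derive_val.
  - apply: continuous_subspaceT; exact: (@cont_of_derive R G G' HG).
have [th thI Eth] := @MVT_segment R g G 0 1 ler01 (fun x _ => Hg x)
   (continuous_subspaceT (@cont_of_derive R g G Hg)).
move: thI; rewrite in_itv /= => /andP [th0 th1].
have := Gmono th th0 th1.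
rewrite /G /g in Eth *; rewrite scale0r add0r subr0 mulr1 in Eth.
rewrite scale0r add0r => H1; apply: (le_trans H1); by rewrite -Eth scale1r.
Qed.

Lemma qinv_proof1 n (r : 'I_(n * 4)) : (r %/ 4 < n)%N.
Proof. by rewrite ltn_divLR. Qed.
Lemma qinv_proof2 (r : nat) : (r %% 4 < 4)%N.
Proof. by rewrite ltn_pmod. Qed.
Definition qinv n (r : 'I_(n * 4)) : 'I_n * 'I_4 :=
  (Ordinal (@qinv_proof1 n r), Ordinal (qinv_proof2 r)).

Lemma qidx_bij n : bijective (fun p : 'I_n * 'I_4 => qidx p.1 p.2).
Proof.
exists (@qinv n).
  move=> [l m]; rewrite /qinv; congr pair; apply: val_inj => /=.
    have := ltn_ord m; move: (nat_of_ord m) => b hb; lia.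
  have := ltn_ord m; move: (nat_of_ord m) => b hb; lia.
move=> r; apply: val_inj => /=; rewrite /qinv /=.
move: (nat_of_ord r) => b; lia.
Qed.

Lemma sum_qidx {R : realType} n (F : 'I_(n * 4) -> R) : \sum_(r < n * 4) F r =
  \sum_(l < n) (F (qidx l i4_0) + F (qidx l i4_1) + F (qidx l i4_2) + F (qidx l i4_3)).
Proof.
rewrite (reindex _ (onW_bij _ (qidx_bij n))) /=.
rewrite -(pair_bigA _ (fun l m => F (qidx l m))) /=.
apply: eq_bigr => l _.
rewrite !big_ord_recr big_ord0 /= add0r.
by congr (_ + _ + _ + _); congr F; apply: val_inj.
Qed.

Theorem lemma3p9 (R : realType) (n : nat) (rho : 'rV[R]_(n * 4) -> R)
  (eps0 : R) :
  C2 rho ->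
  0 < eps0 ->
  (forall (z t : 'rV[R]_(n * 4)),
      \sum_(l < n * 4) \sum_(m < n * 4)
         pderiv m (pderiv l rho) z * t 0 l * t 0 m
      >= eps0 * \sum_(r < n * 4) t 0 r ^+ 2) ->
  let U := [set z : 'rV[R]_(n * 4) | rho z < 0] in
  C1map (vrho rho) /\
  (forall zeta z, boundary U zeta -> U z ->
     qscal (vrho rho zeta) (zeta - z) <> qzero R).
Proof.
move=> [[cont Hk] Hkk] eps0_gt0 hessH U.
split.
  move=> k.
  have -> : (fun z => vrho rho z 0 k) = pderiv k rho.
    by apply: funext => z; rewrite /vrho mxE.
  exact: Hkk.
move=> zeta z [_ notint] Uz.
have rz0 : 0 <= rho zeta.
  rewrite leNgt; apply/negP => rz; apply: notint.
  rewrite /interior /=.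
  have nb : nbhs (rho zeta) [set y : R | y < 0].
    by apply: open_nbhs_nbhs; split; [exact: open_lt | exact: rz].
  exact: (cont zeta _ nb).
have hess : forall (w t : 'rV[R]_(n * 4)), 0 <= \sum_(l < n * 4) \sum_(m < n * 4)
         pderiv m (pderiv l rho) w * t 0 l * t 0 m.
  move=> w t; apply: le_trans (hessH w t).
  by apply: mulr_ge0; [exact: ltW | apply: sumr_ge0 => r _; exact: sqr_ge0].
have key := @convex_ineq R (n * 4) rho (fun k => (Hk k).1) (fun k => (Hk k).2)
  (fun l k => ((Hkk l).2 k).1) (fun l k => ((Hkk l).2 k).2) hess zeta (z - zeta).
rewrite subrK in key.
have neg : \sum_(k < n * 4) (z - zeta) 0 k * pderiv k rho zeta < 0.
  apply: (le_lt_trans key); rewrite subr_lt0; apply: (lt_le_trans Uz rz0).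
move=> E.
have E1 : q1 (qscal (vrho rho zeta) (zeta - z)) = 0 by rewrite E.
move: E1; rewrite /qscal.
rewrite (big_morph (@q1 R) (id1 := 0) (op1 := +%R) (fun x y : quat R => erefl : q1 (qadd x y) = q1 x + q1 y) (erefl : q1 (qzero R) = 0)).
move=> E1.
have : \sum_(k < n * 4) (z - zeta) 0 k * pderiv k rho zeta = 0.
  rewrite sum_qidx (_ : \sum_(l < n) _ = - \sum_(l < n) q1 (qmul (qconj (qcoord (vrho rho zeta) l)) (qcoord (zeta - z) l))); first by rewrite E1 oppr0.
  rewrite -sumrN; apply: eq_bigr => l _.
  rewrite /= /vrho /qcoord /= !mxE; ring.
by move=> H0; rewrite H0 ltxx in neg.
Qed.
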